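(* Let $x,y,z$ be indeterminates over the field $\mathbb{Q}$ of rational numbers. The Krull domain $R=\mathbb{Q}[x,y,zx,zy]$ (the subring of $\mathbb{Q}[x,y,z]$ generated over $\mathbb{Q}$ by $x,y,zx,zy$) is not a half-factorial domain.
   Context: A half-factorial domain is an atomic domain in which any two factorizations of a nonzero nonunit into irreducible elements have the same number of factors. *)

(* Defs.v *)
From HB Require Import structures.
From mathcomp Require Import all_boot all_order all_algebra.
From mathcomp Require Import mpoly.
Set Implicit Arguments. Unset Strict Implicit. Unset Printing Implicit Defensive.
Import GRing.Theory.
Local Open Scope ring_scope.

(* Factorization notions inside a subring of a commutative ring A,
   given as a predicate S : A -> Prop (units and irreducibles are taken
   relative to S, not to A). *)
Section SubringFactorization.
Variable A : comNzRingType.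
Variable S : A -> Prop.

Definition sunit (u : A) : Prop := S u /\ exists2 v, S v & u * v = 1.

Definition sirreducible (a : A) : Prop :=
  [/\ S a, a != 0, ~ sunit a &
      forall b c, S b -> S c -> a = b * c -> sunit b \/ sunit c].

Definition sfactorization (s : seq A) : Prop := forall a, a \in s -> sirreducible a.

Definition satomic : Prop :=
  forall a, S a -> a != 0 -> ~ sunit a ->
    exists2 s, sfactorization s & a = \prod_(b <- s) b.

Definition shalf_factorial : Prop :=
  satomic /\
  forall s1 s2 : seq A, sfactorization s1 -> sfactorization s2 ->
    \prod_(b <- s1) b = \prod_(b <- s2) b -> size s1 = size s2.
End SubringFactorization.

(* Q[x,y,z] with x = 'X_0, y = 'X_1, z = 'X_2. *)
Definition QXYZ := {mpoly rat[3]}.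

(* The Q-subalgebra Q[x, y, zx, zy] of Q[x,y,z]: the image of
   Q[t0,t1,t2,t3] under t0 |-> x, t1 |-> y, t2 |-> z x, t3 |-> z y. *)
Definition gensR : 4.-tuple QXYZ :=
  [tuple 'X_0; 'X_1; 'X_2 * 'X_0; 'X_2 * 'X_1].

Definition inR (p : QXYZ) : Prop :=
  exists q : {mpoly rat[4]}, p = q \mPo gensR.

(* Main.v *)
Require Import Defs.
From HB Require Import structures.
From mathcomp Require Import all_boot all_order all_algebra.
From mathcomp Require Import mpoly.
From mathcomp Require Import ring.
From mathcomp Require Import zify.
Set Implicit Arguments. Unset Strict Implicit. Unset Printing Implicit Defensive.
Import Order.TTheory GRing.Theory Num.Theory.
Local Open Scope ring_scope.
Section Muni.
Variable (n : nat) (R : nzRingType).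

Definition mw (m : 'X_{1..n.+1}) : 'X_{1..n} :=
  [multinom m (widen_ord (leqnSn n) i) | i < n].
Definition mext (m : 'X_{1..n}) (k : nat) : 'X_{1..n.+1} :=
  (mnmwiden m + U_(ord_max) *+ k)%MM.

Lemma mext_max m k : mext m k ord_max = k.
Proof. by rewrite /mext mnmDE mnmwiden_ordmax mulmnE mnm1E eqxx mul1n. Qed.

Lemma mw_mext m k : mw (mext m k) = m.
Proof.
apply/mnmP=> i; rewrite /mw mnmE /mext mnmDE mnmwiden_widen mulmnE mnm1E.
suff -> : (ord_max == widen_ord (leqnSn n) i) = false by rewrite mul0n addn0.
by apply/negbTE; rewrite eq_sym neq_ltn /= ltn_ord.
Qed.

Lemma mext_mw m : mext (mw m) (m ord_max) = m.
Proof.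
apply/mnmP=> i; rewrite /mext mnmDE mulmnE mnm1E.
case: (unliftP ord_max i) => [j ->|->].
- have -> : lift ord_max j = widen_ord (leqnSn n) j by apply/val_inj; rewrite /= /bump leqNgt ltn_ord.
  rewrite mnmwiden_widen /mw mnmE.
  suff -> : (ord_max == widen_ord (leqnSn n) j) = false by rewrite mul0n addn0.
  by apply/negbTE; rewrite eq_sym neq_ltn /= ltn_ord.
- by rewrite mnmwiden_ordmax eqxx mul1n.
Qed.

Lemma muni_coef (p : {mpoly R[n.+1]}) k m :
  ((muni p)`_k)@_m = p@_(mext m k).
Proof.
rewrite muniE coef_sum raddf_sum /=.
rewrite [in RHS](mpolyE p) raddf_sum /=.
apply: eq_bigr => m' _.
rewrite coefZ coefXn.
case: (eqVneq (m' ord_max) k) => [<-|ne].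
  rewrite mulr1 !mcoeffZ !mcoeffX.
  suff -> : ([multinom [tuple m' (widen_ord (leqnSn n) i) | i < n]] == m) = (m' == mext m (m' ord_max)) by [].
  apply/eqP/eqP => [<-|->]; first by rewrite -[in LHS](mext_mw m').
  by have := mw_mext m (m' ord_max); rewrite /mw => ->.
rewrite mulr0 !mcoeffZ !mcoeff0 mcoeffX.
case: eqP => [E|]; last by rewrite mulr0.
by case/eqP: ne; rewrite E mext_max.
Qed.

Lemma muni_coef' (p : {mpoly R[n.+1]}) m :
  p@_m = ((muni p)`_(m ord_max))@_(mw m).
Proof. by rewrite muni_coef mext_mw. Qed.

Lemma muni_const (p : {mpoly R[n.+1]}) c :
  muni p = (c%:MP)%:P -> p = c%:MP.
Proof.
move=> E; apply/mpolyP => m.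
rewrite muni_coef' E coefC mcoeffC.
case: (eqVneq (m ord_max) 0%N) => [h|h].
  rewrite /= mcoeffC; suff -> : (mw m == 0%MM) = (m == 0%MM) by [].
  apply/eqP/eqP => [E0|->].
    by rewrite -(mext_mw m) E0 h; apply/mnmP=> i; rewrite /mext mnmDE mulmnE muln0 addn0 mnmwiden0 mnm0E.
  by apply/mnmP=> i; rewrite /mw mnmE !mnm0E.
rewrite /= mcoeff0.
case: eqP => [E0|]; last by rewrite mulr0.
by case/eqP: h; rewrite E0 mnm0E.
Qed.
End Muni.
Definition i0 : 'I_3 := @Ordinal 3 0 isT.
Definition i1 : 'I_3 := @Ordinal 3 1 isT.
Definition i2 : 'I_3 := @Ordinal 3 2 isT.

Definition PM (p : {mpoly rat[3]}) : Prop :=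
  forall m, m \in msupp p -> (m i2 <= m i0 + m i1)%N.

Lemma PM_add p q : PM p -> PM q -> PM (p + q).
Proof.
move=> hp hq m /msuppD_le; rewrite mem_cat => /orP[]; [exact: hp|exact: hq].
Qed.

Lemma PM_scale c p : PM p -> PM (c *: p).
Proof. by move=> hp m /msuppZ_le; apply: hp. Qed.

Lemma PM_mul p q : PM p -> PM q -> PM (p * q).
Proof.
move=> hp hq m /msuppM_le /allpairsP [[m1 m2] /= [h1 h2 ->]].
rewrite !mnmDE; have := hp _ h1; have := hq _ h2; lia.
Qed.

Lemma PM_X (m : 'X_{1..3}) : (m i2 <= m i0 + m i1)%N -> PM 'X_[m].
Proof. by move=> h m'; rewrite msuppX inE => /eqP ->. Qed.

Lemma PM_1 : PM 1.
Proof. rewrite -mpolyX0; apply: PM_X; by rewrite !mnm0E. Qed.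

Lemma PM_sum (I : Type) (r : seq I) (F : I -> {mpoly rat[3]}) :
  (forall i, PM (F i)) -> PM (\sum_(i <- r) F i).
Proof.
move=> h; elim: r => [|a r ih]; first by rewrite big_nil => m; rewrite msupp0.
by rewrite big_cons; apply: PM_add.
Qed.

Lemma PM_prod (I : Type) (r : seq I) (F : I -> {mpoly rat[3]}) :
  (forall i, PM (F i)) -> PM (\prod_(i <- r) F i).
Proof.
move=> h; elim: r => [|a r ih]; first by rewrite big_nil; exact: PM_1.
by rewrite big_cons; apply: PM_mul.
Qed.

Lemma PM_exp p k : PM p -> PM (p ^+ k).
Proof.
move=> h; elim: k => [|k ih]; first by rewrite expr0; exact: PM_1.
by rewrite exprS; apply: PM_mul.
Qed.

Lemma PM_gens (i : 'I_4) : PM (tnth gensR i).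
Proof.
case: i => [[|[|[|[|k]]]] Hk] //.
- rewrite (tnth_nth 0) /=; apply: PM_X; by rewrite !mnm1E.
- rewrite (tnth_nth 0) /=; apply: PM_X; by rewrite !mnm1E.
- rewrite (tnth_nth 0) /= -mpolyXD; apply: PM_X; by rewrite !mnmDE !mnm1E.
- rewrite (tnth_nth 0) /= -mpolyXD; apply: PM_X; by rewrite !mnmDE !mnm1E.
Qed.

Lemma inR_PM p : inR p -> PM p.
Proof.
case=> q ->; rewrite comp_mpolyEX; apply: PM_sum => m.
apply: PM_scale; rewrite comp_mpolyX; apply: PM_prod => i.
apply: PM_exp; exact: PM_gens.
Qed.

Lemma mext_i2 (m : 'X_{1..2}) k : mext m k i2 = k.
Proof. have -> : i2 = ord_max by apply/val_inj. exact: mext_max. Qed.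
Lemma mext_i0 (m : 'X_{1..2}) k : mext m k i0 = m (@Ordinal 2 0 isT).
Proof.
have -> : i0 = widen_ord (leqnSn 2) (@Ordinal 2 0 isT) by apply/val_inj.
rewrite /mext mnmDE mnmwiden_widen mulmnE mnm1E; case: eqP => [/(congr1 val) /= /eqP|]; rewrite ?mul0n ?addn0 // ltn_eqF //.
Qed.
Lemma mext_i1 (m : 'X_{1..2}) k : mext m k i1 = m (@Ordinal 2 1 isT).
Proof.
have -> : i1 = widen_ord (leqnSn 2) (@Ordinal 2 1 isT) by apply/val_inj.
rewrite /mext mnmDE mnmwiden_widen mulmnE mnm1E; case: eqP => [/(congr1 val) /= /eqP|]; rewrite ?mul0n ?addn0 // ltn_eqF //.
Qed.

Lemma mdeg2 (m : 'X_{1..2}) : mdeg m = (m (@Ordinal 2 0 isT) + m (@Ordinal 2 1 isT))%N.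
Proof.
rewrite mdegE !big_ord_recl big_ord0 addn0; congr (m _ + m _)%N; exact/val_inj.
Qed.

Lemma inR_coef (c : QXYZ) k : inR c -> (muni c)`_k != 0 -> (k < msize ((muni c)`_k))%N.
Proof.
move=> /inR_PM hc nz.
have hl := mlead_supp nz.
have := msize_mdeg_lt hl; apply: leq_ltn_trans.
move: hl; rewrite mcoeff_msupp muni_coef -mcoeff_msupp => /hc.
by rewrite mext_i2 mext_i0 mext_i1 mdeg2.
Qed.

Lemma square_trick (D : comNzRingType) (ev : D -> rat)
  (evM : {morph ev : a b / a * b}) (evN : {morph ev : a / - a})
  (B C : {poly D}) :
  (size B <= 2)%N -> (size C <= 2)%N -> (B * C)`_1 = 0 ->
  0 < ev ((B * C)`_0 * (B * C)`_2) -> False.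
Proof.
move=> sB sC.
have B2 : B`_2 = 0 by rewrite nth_default.
have C2 : C`_2 = 0 by rewrite nth_default.
rewrite !coefM !big_ord_recr !big_ord0 /= !add0r.
have -> : (2 - 1)%N = 1%N by [].
have -> : (2 - 2)%N = 0%N by [].
have -> : (1 - 1)%N = 0%N by [].
have -> : (1 - 0)%N = 1%N by [].
have -> : (2 - 0)%N = 2%N by [].
have -> : (0 - 0)%N = 0%N by [].
rewrite B2 C2 mulr0 mul0r !addr0 add0r.
move=> h1.
have e : B`_0 * C`_1 = - (B`_1 * C`_0) by apply/eqP; rewrite -subr_eq0 opprK h1.
have -> : B`_0 * C`_0 * (B`_1 * C`_1) = (B`_0 * C`_1) * (B`_1 * C`_0).
  by ring.
rewrite e mulNr evN evM.
set t := ev (B`_1 * C`_0).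
have : 0 <= t * t by rewrite -expr2 sqr_ge0.
rewrite ltrNr oppr0 => h h'; have := lt_le_trans h' h; by rewrite ltxx.
Qed.

Lemma lead_side n (B C P : {poly {mpoly rat[n]}}) :
  B * C = P -> size B = 1%N -> C != 0 ->
  (msize (lead_coef P) <= msize (lead_coef C))%N -> exists k, B = (k%:MP)%:P.
Proof.
move=> E sB nzC hle.
have eB : B = (B`_0)%:P by apply: size1_polyC; rewrite sB.
have nzB0 : B`_0 != 0.
  by apply/eqP => h; move: sB; rewrite eB h size_poly0.
have nzlC : lead_coef C != 0 by rewrite lead_coef_eq0.
move: hle; rewrite -E lead_coefM eB lead_coefC msizeM //.
have h1 : (0 < msize (B`_0))%N by rewrite lt0n msize_poly_eq0.
move=> hle.
have : (msize (B`_0) <= 1)%N.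
  have h2 : (0 < msize (lead_coef C))%N by rewrite lt0n msize_poly_eq0.
  move: hle h1 h2; case: (msize (B`_0)) => [|k] //= h _ _; move: h; rewrite -{2}[mmeasure _ _]add0n leq_add2r; case: k => //.
move=> h0; have e0 := msize1_polyC h0; exists (B`_0@_0); by rewrite -e0.
Qed.

Lemma muni_Xw n (i : 'I_n) :
  muni ('X_(widen_ord (leqnSn n) i) : {mpoly rat[n.+1]}) = ('X_i)%:P.
Proof.
rewrite muniE msuppX big_seq1 mcoeffX eqxx scale1r.
have -> : U_(widen_ord (leqnSn n) i)%MM ord_max = 0%N.
  by rewrite mnm1E; apply/eqP; rewrite eqb0 neq_ltn /= ltn_ord.
rewrite expr0 -alg_polyC; congr (_ *: _); congr 'X_[_].
by apply/mnmP => j; rewrite mnmE !mnm1E.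
Qed.

Lemma muni_Xmax n : muni ('X_ord_max : {mpoly rat[n.+1]}) = 'X.
Proof.
rewrite muniE msuppX big_seq1 mcoeffX eqxx scale1r mnm1E eqxx expr1.
have -> : ('X_[[multinom U_(@ord_max n)%MM (widen_ord (leqnSn n) i) | i < n]] : {mpoly rat[n]}) = 1.
  rewrite -(mpolyX0 n rat); congr 'X_[_].
  apply/mnmP => j; rewrite mnmE mnm1E mnm0E; apply/eqP; rewrite eqb0 neq_ltn /= ltn_ord orbT //.
by rewrite scale1r.
Qed.

Lemma muni30 : muni ('X_0 : {mpoly rat[3]}) = ('X_0 : {mpoly rat[2]})%:P.
Proof.
have -> : (0 : 'I_3) = widen_ord (leqnSn 2) (0 : 'I_2) by apply/val_inj.
exact: muni_Xw.
Qed.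
Lemma muni31 : muni ('X_1 : {mpoly rat[3]}) = ('X_1 : {mpoly rat[2]})%:P.
Proof.
have -> : (1 : 'I_3) = widen_ord (leqnSn 2) (1 : 'I_2) by apply/val_inj.
exact: muni_Xw.
Qed.
Lemma muni32 : muni ('X_2 : {mpoly rat[3]}) = 'X.
Proof.
have -> : (2 : 'I_3) = ord_max by apply/val_inj.
exact: muni_Xmax.
Qed.
Lemma muni20 : muni ('X_0 : {mpoly rat[2]}) = ('X_0 : {mpoly rat[1]})%:P.
Proof.
have -> : (0 : 'I_2) = widen_ord (leqnSn 1) (0 : 'I_1) by apply/val_inj.
exact: muni_Xw.
Qed.
Lemma muni21 : muni ('X_1 : {mpoly rat[2]}) = 'X.
Proof.
have -> : (1 : 'I_2) = ord_max by apply/val_inj.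
exact: muni_Xmax.
Qed.

Lemma aux1 (u v : nat) : (0 < u)%N -> (0 < v)%N -> 3%N = (u + v).-1 -> u != 1%N -> v != 1%N ->
  (u <= 2)%N && (v <= 2)%N.
Proof. move=> a b c d e; apply/andP; rewrite -subn1 in c; lia. Qed.
Lemma aux2 (u v : nat) : 3%N = (u + v).-1 -> u = 1%N -> v = 3%N.
Proof. rewrite -subn1; lia. Qed.
Lemma aux3 (u v : nat) : 3%N = (u + v).-1 -> v = 1%N -> u = 3%N.
Proof. rewrite -subn1; lia. Qed.

Lemma aux4 (u v : nat) : true = (u + v).-1 :> nat -> (0 < u)%N -> (0 < v)%N -> u = 1%N /\ v = 1%N.
Proof. rewrite -subn1 /=; lia. Qed.

Lemma core n (B C P : {poly {mpoly rat[n]}}) (ev : {mpoly rat[n]} -> rat)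
  (evM : {morph ev : a b / a * b}) (evN : {morph ev : a / - a}) :
  B * C = P -> size P = 3%N -> P`_1 = 0 -> 0 < ev (P`_0 * P`_2) ->
  (size B = 3%N -> (msize (lead_coef P) <= msize (lead_coef B))%N) ->
  (size C = 3%N -> (msize (lead_coef P) <= msize (lead_coef C))%N) ->
  (exists k, B = (k%:MP)%:P) \/ (exists k, C = (k%:MP)%:P).
Proof.
move=> E sP P1 evP hB hC.
have nzP : P != 0 by rewrite -size_poly_eq0 sP.
have nzB : B != 0 by apply: contraNneq nzP => h; rewrite -E h mul0r.
have nzC : C != 0 by apply: contraNneq nzP => h; rewrite -E h mulr0.
have sB0 : (0 < size B)%N by rewrite size_poly_gt0.
have sC0 : (0 < size C)%N by rewrite size_poly_gt0.
have h := size_mul nzB nzC; rewrite E sP in h.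
case: (eqVneq (size B) 1%N) => [eB|nB].
  left; apply: (lead_side E eB nzC); apply: hC; exact: aux2 h eB.
case: (eqVneq (size C) 1%N) => [eC|nC].
  right; apply: (@lead_side n C B P (etrans (mulrC C B) E) eC nzB); apply: hB; exact: aux3 h eC.
have /andP[sB2 sC2] := aux1 sB0 sC0 h nB nC.
exfalso; apply: (@square_trick _ ev evM evN B C sB2 sC2); rewrite E //.
Qed.

Definition ev2 (p : {mpoly rat[2]}) : rat :=
  p.@[fun i : 'I_2 => if val i == 0%N then 1 else 0].
Definition ev1 (p : {mpoly rat[1]}) : rat := p.@[fun _ : 'I_1 => 1].

Lemma ev2M : {morph ev2 : a b / a * b}. Proof. move=> a b; exact: mevalM. Qed.
Lemma ev2N : {morph ev2 : a / - a}. Proof. move=> a; exact: mevalN. Qed.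
Lemma ev1M : {morph ev1 : a b / a * b}. Proof. move=> a b; exact: mevalM. Qed.
Lemma ev1N : {morph ev1 : a / - a}. Proof. move=> a; exact: mevalN. Qed.

Lemma size_1X2 (R : nzRingType) : size (1 + 'X^2 : {poly R}) = 3%N.
Proof. by rewrite addrC size_polyDl size_polyXn // size_poly1. Qed.

Lemma coef_1X2 (R : nzRingType) (i : nat) :
  (1 + 'X^2 : {poly R})`_i = if (i == 0%N) || (i == 2%N) then 1 else 0.
Proof.
rewrite coefD coef1 coefXn.
by case: i => [|[|[|i]]] //=; rewrite ?addr0 ?add0r.
Qed.

Lemma Lz (b c : QXYZ) (d : {mpoly rat[2]}) :
  inR b -> inR c -> muni (b * c) = d%:P * (1 + 'X^2) ->
  (msize d <= 3)%N -> 0 < ev2 (d * d) ->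
  (exists k, b = k%:MP) \/ (exists k, c = k%:MP).
Proof.
move=> hb hc E sd evd.
have nzd : d != 0 by apply: contraTneq evd => ->; rewrite mulr0 /ev2 meval0 ltxx.
set P := d%:P * (1 + 'X^2) in E.
have sP : size P = 3%N by rewrite /P size_Cmul // size_1X2.
have cP i : P`_i = if (i == 0%N) || (i == 2%N) then d else 0.
  by rewrite /P coefCM coef_1X2; case: ifP; rewrite ?mulr1 ?mulr0.
have lP : lead_coef P = d by rewrite lead_coefE sP cP.
have key (u : QXYZ) : inR u -> size (muni u) = 3%N ->
    (msize (lead_coef P) <= msize (lead_coef (muni u)))%N.
  move=> hu su; rewrite lP; apply: (leq_trans sd).
  have nz : lead_coef (muni u) != 0.
    by rewrite lead_coef_eq0 -size_poly_eq0 su.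
  have := inR_coef hu; rewrite lead_coefE su in nz *.
  by move/(_ 2%N nz).
have E' : muni b * muni c = P by rewrite -muniM E.
have P1 : P`_1 = 0 by rewrite cP.
have eP : 0 < ev2 (P`_0 * P`_2) by rewrite !cP.
have := @core 2 (muni b) (muni c) P ev2 ev2M ev2N E' sP P1 eP (key _ hb) (key _ hc).
by case=> -[k /muni_const ->]; [left|right]; exists k.
Qed.

Lemma Ly (b c : {mpoly rat[2]}) :
  muni (b * c) = (('X_0 : {mpoly rat[1]}) ^+ 2)%:P + 'X^2 ->
  (exists k, b = k%:MP) \/ (exists k, c = k%:MP).
Proof.
move=> E.
set P := (('X_0 : {mpoly rat[1]}) ^+ 2)%:P + 'X^2 in E.
have sP : size P = 3%N.
  by rewrite /P addrC size_polyDl size_polyXn // (leq_ltn_trans (size_polyC_leq1 _)).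
have cP i : P`_i = if i == 0%N then ('X_0 : {mpoly rat[1]}) ^+ 2 else if i == 2%N then 1 else 0.
  by rewrite /P coefD coefC coefXn; case: i => [|[|[|i]]] //=; rewrite ?addr0 ?add0r.
have lP : lead_coef P = 1 by rewrite lead_coefE sP cP.
have key (u : {mpoly rat[2]}) : size (muni u) = 3%N ->
    (msize (lead_coef P) <= msize (lead_coef (muni u)))%N.
  move=> su; rewrite lP msize1 lt0n msize_poly_eq0 lead_coef_eq0 -size_poly_eq0 su //.
have E' : muni b * muni c = P by rewrite -muniM E.
have P1 : P`_1 = 0 by rewrite cP.
have eP : 0 < ev1 (P`_0 * P`_2).
  by rewrite !cP /= mulr1 /ev1 expr2 mevalM mevalXU mulr1.
have := @core 1 (muni b) (muni c) P ev1 ev1M ev1N E' sP P1 eP (key b) (key c).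
by case=> -[k /muni_const ->]; [left|right]; exists k.
Qed.

Definition xx : QXYZ := 'X_0.
Definition yy : QXYZ := 'X_1.
Definition zz : QXYZ := 'X_2.
Definition GG : QXYZ := xx ^+ 2 + yy ^+ 2.
Definition H1 : QXYZ := xx ^+ 2 + (zz * xx) ^+ 2.
Definition H2 : QXYZ := xx ^+ 2 + yy ^+ 2 + (zz * xx) ^+ 2 + (zz * yy) ^+ 2.

Definition g2 : {mpoly rat[2]} := 'X_0 ^+ 2 + 'X_1 ^+ 2.
Definition x2 : {mpoly rat[2]} := 'X_0 ^+ 2.

Lemma muniH1 : muni H1 = x2%:P * (1 + 'X^2).
Proof.
rewrite /H1 /xx /zz !expr2 !muniD !muniM muni30 muni32 /x2 expr2 polyCM.
ring.
Qed.

Lemma muniH2 : muni H2 = g2%:P * (1 + 'X^2).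
Proof.
rewrite /H2 /xx /yy /zz !expr2 !muniD !muniM muni30 muni31 muni32 /g2.
rewrite polyCD !expr2 !polyCM; ring.
Qed.

Lemma muniG : muni GG = g2%:P.
Proof.
by rewrite /GG /xx /yy !expr2 !muniD !muniM muni30 muni31 /g2 polyCD !expr2 !polyCM.
Qed.

Lemma munig2 : muni g2 = (('X_0 : {mpoly rat[1]}) ^+ 2)%:P + 'X^2.
Proof. by rewrite /g2 !expr2 !muniD !muniM muni20 muni21 polyCM. Qed.

Lemma msizeX1 n (i : 'I_n) : msize ('X_i : {mpoly rat[n]}) = 2%N.
Proof. by rewrite msizeX mdeg1. Qed.

Lemma msize_sq n (i : 'I_n) : msize (('X_i : {mpoly rat[n]}) ^+ 2) = 3%N.
Proof.
rewrite expr2 msizeM ?msizeX1 // -msize_poly_eq0 msizeX1 //.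
Qed.

Lemma LG (b c : QXYZ) : GG = b * c ->
  (exists k, b = k%:MP) \/ (exists k, c = k%:MP).
Proof.
move=> E.
have E1 : muni b * muni c = g2%:P by rewrite -muniM -E muniG.
have nzg : g2 != 0.
  apply/eqP => h; have := congr1 ev2 h.
  by rewrite /ev2 meval0 /g2 mevalD !expr2 !mevalM !mevalXU /=.
have nzP : g2%:P != 0 by rewrite polyC_eq0.
have nzB : muni b != 0 by apply: contraNneq nzP => h; rewrite -E1 h mul0r.
have nzC : muni c != 0 by apply: contraNneq nzP => h; rewrite -E1 h mulr0.
have h := size_mul nzB nzC; rewrite E1 size_polyC nzg in h.
have sB0 : (0 < size (muni b))%N by rewrite size_poly_gt0.
have sC0 : (0 < size (muni c))%N by rewrite size_poly_gt0.
have [sB sC] : size (muni b) = 1%N /\ size (muni c) = 1%N.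
  exact: aux4 h sB0 sC0.
have eB : muni b = ((muni b)`_0)%:P by apply: size1_polyC; rewrite sB.
have eC : muni c = ((muni c)`_0)%:P by apply: size1_polyC; rewrite sC.
have E2 : (muni b)`_0 * (muni c)`_0 = g2.
  have := E1; rewrite {1}eB {1}eC -polyCM; exact: polyC_inj.
have := Ly (etrans (congr1 (@muni 1 rat) E2) munig2).
case=> -[k hk]; [left|right]; exists k; apply: muni_const.
  by rewrite eB hk.
by rewrite eC hk.
Qed.

Definition v0 : 'I_3 -> rat := fun _ => 0.
Definition v1 : 'I_3 -> rat := fun i => if val i == 0%N then 1 else 0.

Lemma inR_C (k : rat) : inR k%:MP.
Proof. by exists k%:MP; rewrite comp_mpolyC. Qed.

Lemma sunit_C (k : rat) : k != 0 -> sunit inR (k%:MP : QXYZ).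
Proof.
move=> nz; split; first exact: inR_C.
exists (k^-1)%:MP; first exact: inR_C.
by rewrite -mpolyCM divff.
Qed.

Lemma aux5 (u v : nat) : 1%N = (u + v).-1 -> (0 < u)%N -> (0 < v)%N -> (u <= 1)%N.
Proof. rewrite -subn1; lia. Qed.

Lemma irr_of (a : QXYZ) : inR a -> a.@[v0] = 0 -> a.@[v1] = 1 ->
  (forall b c, inR b -> inR c -> a = b * c ->
     (exists k, b = k%:MP) \/ (exists k, c = k%:MP)) ->
  sirreducible inR a.
Proof.
move=> ha h0 h1 hdec.
have nza : a != 0 by apply/eqP => e; move: h1; rewrite e meval0 => /eqP; rewrite eq_sym oner_eq0.
have nconst : forall k, a <> k%:MP.
  by move=> k e; move: h0 h1; rewrite e !mevalC => -> /eqP; rewrite eq_sym oner_eq0.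
split => //.
- case=> _ [v _ e].
  have nzv : v != 0 by apply: contra_eq_neq e => ->; rewrite mulr0 eq_sym oner_neq0.
  have := msizeM nza nzv; rewrite e msize1.
  have s1 : (0 < msize a)%N by rewrite lt0n msize_poly_eq0.
  have s2 : (0 < msize v)%N by rewrite lt0n msize_poly_eq0.
  move=> h; have : (msize a <= 1)%N.
    exact: aux5 h s1 s2.
  move=> hh; exact: (nconst _ (msize1_polyC hh)).
- move=> b c hb hc e; case: (hdec b c hb hc e) => -[k ek]; [left|right];
    rewrite ek; apply: sunit_C; apply/eqP => k0; move: nza;
    by rewrite e ek k0 mpolyC0 ?mul0r ?mulr0 eqxx.
Qed.

Lemma inR_xx : inR xx.
Proof. by exists 'X_0; rewrite comp_mpolyXU. Qed.

Lemma inR_GG : inR GG.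
Proof.
exists ('X_0 ^+ 2 + 'X_1 ^+ 2); rewrite comp_mpolyD !expr2.
rewrite !(rmorphM (comp_mpoly gensR)) /= !comp_mpolyXU //.
Qed.

Lemma inR_H1 : inR H1.
Proof.
exists ('X_0 ^+ 2 + 'X_2 ^+ 2); rewrite comp_mpolyD !expr2.
rewrite !(rmorphM (comp_mpoly gensR)) /= !comp_mpolyXU //.
Qed.

Lemma inR_H2 : inR H2.
Proof.
exists ('X_0 ^+ 2 + 'X_1 ^+ 2 + 'X_2 ^+ 2 + 'X_3 ^+ 2); rewrite !comp_mpolyD !expr2.
rewrite !(rmorphM (comp_mpoly gensR)) /= !comp_mpolyXU //.
Qed.

Lemma aux6 (u v : nat) : 2%N = (u + v).-1 -> (0 < u)%N -> (0 < v)%N -> (u <= 1)%N \/ (v <= 1)%N.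
Proof. rewrite -subn1; lia. Qed.

Lemma irr_xx : sirreducible inR xx.
Proof.
apply: irr_of; first exact: inR_xx.
- by rewrite /xx mevalXU.
- by rewrite /xx mevalXU.
move=> b c _ _ e.
have nzx : xx != 0 by rewrite -msize_poly_eq0 /xx msizeX1.
have nzb : b != 0 by apply: contraNneq nzx => h; rewrite e h mul0r.
have nzc : c != 0 by apply: contraNneq nzx => h; rewrite e h mulr0.
have := msizeM nzb nzc; rewrite -e /xx msizeX1 => h.
have s1 : (0 < msize b)%N by rewrite lt0n msize_poly_eq0.
have s2 : (0 < msize c)%N by rewrite lt0n msize_poly_eq0.
case: (aux6 h s1 s2) => hh; [left|right]; eexists; exact: (msize1_polyC hh).
Qed.

Lemma irr_GG : sirreducible inR GG.
Proof.
apply: irr_of; first exact: inR_GG.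
- by rewrite /GG /xx /yy !expr2 !(mevalD, mevalM, mevalXU) /v0 /= ?mulr0 ?mul0r ?addr0 ?add0r ?mulr1 ?mul1r.
- by rewrite /GG /xx /yy !expr2 !(mevalD, mevalM, mevalXU) /v1 /= ?mulr0 ?mul0r ?addr0 ?add0r ?mulr1 ?mul1r.
move=> b c _ _ e; exact: LG e.
Qed.

Lemma irr_H1 : sirreducible inR H1.
Proof.
apply: irr_of; first exact: inR_H1.
- by rewrite /H1 /xx /zz !expr2 !(mevalD, mevalM, mevalXU) /v0 /= ?mulr0 ?mul0r ?addr0 ?add0r ?mulr1 ?mul1r.
- by rewrite /H1 /xx /zz !expr2 !(mevalD, mevalM, mevalXU) /v1 /= ?mulr0 ?mul0r ?addr0 ?add0r ?mulr1 ?mul1r.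
move=> b c hb hc e; apply: (Lz hb hc (d := x2)).
- by rewrite -e muniH1.
- by rewrite /x2 msize_sq.
- by rewrite /ev2 /x2 !expr2 !(mevalD, mevalM, mevalXU) /= ?mulr0 ?mul0r ?addr0 ?add0r ?mulr1 ?mul1r.
Qed.

Lemma irr_H2 : sirreducible inR H2.
Proof.
apply: irr_of; first exact: inR_H2.
- by rewrite /H2 /xx /yy /zz !expr2 !(mevalD, mevalM, mevalXU) /v0 /= ?mulr0 ?mul0r ?addr0 ?add0r ?mulr1 ?mul1r.
- by rewrite /H2 /xx /yy /zz !expr2 !(mevalD, mevalM, mevalXU) /v1 /= ?mulr0 ?mul0r ?addr0 ?add0r ?mulr1 ?mul1r.
move=> b c hb hc e; apply: (Lz hb hc (d := g2)).
- by rewrite -e muniH2.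
- rewrite /g2; apply: (leq_trans (msizeD_le _ _)); by rewrite !msize_sq.
- by rewrite /ev2 /g2 !expr2 !(mevalD, mevalM, mevalXU) /= ?mulr0 ?mul0r ?addr0 ?add0r ?mulr1 ?mul1r.
Qed.

Theorem mainTheorem3 : ~ shalf_factorial inR.
Proof.
case=> _ hf.
have := hf [:: H2; xx; xx] [:: H1; GG].
have f1 : sfactorization inR [:: H2; xx; xx].
  by move=> a; rewrite !inE => /or3P [] /eqP ->; [exact: irr_H2|exact: irr_xx|exact: irr_xx].
have f2 : sfactorization inR [:: H1; GG].
  by move=> a; rewrite !inE => /orP [] /eqP ->; [exact: irr_H1|exact: irr_GG].
move=> /(_ f1 f2); rewrite !big_cons !big_nil => h.
suff : (3 = 2)%N by [].
apply: h; rewrite /H2 /H1 /GG; ring.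
Qed.
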